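(* Let $0\le b\le1$, $M>0$ and $0\le\alpha<1$, and let $r_0=r_0(\alpha)$ be the real root in $(0,1)$ of the equation \[2M\left(1+\frac{\alpha(1-r)\log(1-r)}{r}\right)=\big(2(1+M)(1-\alpha)+(2-\alpha)(M-4b)r\big)(1-r).\] Let $\mathcal{F}$ be the class of functions $f\in\mathcal{A}_b$, $f(z)=z+\sum_{n\ge2}a_nz^n$, with $|a_n|\le M/n$ for all $n\ge3$. Then: (i) every $f\in\mathcal{F}$ satisfies $\left|\frac{zf'(z)}{f(z)}-1\right|\le1-\alpha$ for $|z|\le r_0$; (ii) $r_0(\alpha)$ is the radius of starlikeness of order $\alpha$ of $\mathcal{F}$; (iii) $r_0(1/2)$ is the radius of parabolic starlikeness of $\mathcal{F}$. All results are sharp, with extremal function $f_0(z)=(1+M)z+(M/2-2b)z^2+M\log(1-z)=z-2bz^2-M\sum_{n\ge3}z^n/n$.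
   Context: $\mathbb{D}=\{z\in\mathbb{C}:|z|<1\}$; $\log(1-z)$ denotes the principal branch on $\mathbb{D}$, i.e. the branch vanishing at $z=0$. For $0\le b\le1$, $\mathcal{A}_b$ is the class of analytic functions $f$ on $\mathbb{D}$ of the form $f(z)=z+a_2z^2+a_3z^3+\cdots$ with $|a_2|=2b$. For a class $\mathcal{F}$ of analytic functions on $\mathbb{D}$ normalized by $f(0)=0$, $f'(0)=1$, and $0\le\alpha<1$, the radius of starlikeness of order $\alpha$ of $\mathcal{F}$ is the supremum of $r\in(0,1]$ such that every $f\in\mathcal{F}$ satisfies $f(z)\ne0$ for $0<|z|<r$ and $\operatorname{Re}\big(zf'(z)/f(z)\big)>\alpha$ for $|z|<r$ (the quotient being $1$ at $z=0$). The radius of parabolic starlikeness of $\mathcal{F}$ is the supremum of $r\in(0,1]$ such that every $f\in\mathcal{F}$ satisfies $\operatorname{Re}\big(zf'(z)/f(z)\big)>\left|zf'(z)/f(z)-1\right|$ for $|z|<r$. *)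

(* Defs.v *)
From Stdlib Require Import Reals.
From Coquelicot Require Import Coquelicot.

Local Open Scope R_scope.

(* Sum of a complex series, computed componentwise (the sum of the series
   whenever it converges, which is always the case below on the unit disc). *)
Definition CSeries (u : nat -> C) : C :=
  (Series (fun n => Re (u n)), Series (fun n => Im (u n))).

(* The analytic function f(z) = sum_n a_n z^n on the unit disc, given by its
   Taylor coefficients a, and its derivative f'(z) = sum_n (n+1) a_(n+1) z^n. *)
Definition fval (a : nat -> C) (z : C) : C :=
  CSeries (fun n => (a n * z ^ n)%C).
Definition dval (a : nat -> C) (z : C) : C :=
  CSeries (fun n => (RtoC (INR (S n)) * a (S n) * z ^ n)%C).

Definition quot (a : nat -> C) (z : C) : C :=
  if Ceq_dec z 0%C then 1%C else (z * dval a z / fval a z)%C.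

(* The class F: f in A_b (a_0 = 0, a_1 = 1, |a_2| = 2b) with |a_n| <= M/n, n >= 3. *)
Definition classF (M b : R) (a : nat -> C) : Prop :=
  a 0%nat = 0%C /\ a 1%nat = 1%C /\ Cmod (a 2%nat) = 2 * b /\
  forall n : nat, (3 <= n)%nat -> Cmod (a n) <= M / INR n.

Definition r0_eq (M b alpha r : R) : Prop :=
  2 * M * (1 + alpha * (1 - r) * ln (1 - r) / r) =
  (2 * (1 + M) * (1 - alpha) + (2 - alpha) * (M - 4 * b) * r) * (1 - r).

Definition is_r0 (M b alpha r : R) : Prop :=
  0 < r < 1 /\ r0_eq M b alpha r /\
  forall s : R, 0 < s < 1 -> r0_eq M b alpha s -> s = r.

(* Radius of starlikeness of order alpha of F = sup of this set. *)
Definition starlike_radii (M b alpha : R) (r : R) : Prop :=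
  0 < r <= 1 /\
  forall a, classF M b a ->
    (forall z : C, 0 < Cmod z < r -> fval a z <> 0%C) /\
    (forall z : C, Cmod z < r -> Re (quot a z) > alpha).

(* Radius of parabolic starlikeness of F = sup of this set. *)
Definition parabolic_radii (M b : R) (r : R) : Prop :=
  0 < r <= 1 /\
  forall a, classF M b a ->
    forall z : C, Cmod z < r -> Re (quot a z) > Cmod (quot a z - 1)%C.

(* Main.v *)
Require Import Defs.
From Stdlib Require Import Reals Lra Lia Psatz.
From Coquelicot Require Import Coquelicot.
Local Open Scope R_scope.

Lemma ex_geom (u : nat -> R) K r : 0 <= r < 1 -> (forall n, Rabs (u n) <= K * r ^ n) -> ex_series u.
Proof.
  intros Hr Hu. apply (ex_series_le u (fun n => K * r^n)).
  - intros n. exact (Hu n).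
  - apply (ex_series_scal_l K (fun n => r^n)). exists (/(1-r)). apply is_series_geom. rewrite Rabs_pos_eq; lra.
Qed.

Lemma Series_zero : Series (fun _ => 0) = 0.
Proof.
  rewrite <- (Series_ext (fun n => 0 * 0)). rewrite Series_scal_l. ring. intros; ring.
Qed.

Lemma Series_ge0 (a : nat -> R) : (forall n, 0 <= a n) -> ex_series a -> 0 <= Series a.
Proof.
  intros H He. rewrite <- Series_zero. apply Series_le; auto. intros n; split; [lra | auto].
Qed.

Lemma Series_lt1 (a b : nat -> R) : (forall n, 0 <= a n <= b n) -> a 1%nat < b 1%nat ->
  ex_series a -> ex_series b -> Series a < Series b.
Proof.
  intros H H1 Ea Eb.
  assert (E : ex_series (fun n => b n - a n)).
  { apply (ex_series_minus b a Eb Ea). }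
  assert (Hs := Series_minus b a Eb Ea).
  assert (E1 := proj1 (ex_series_incr_1 _) E). cbv beta in E1.
  assert (E2 := proj1 (ex_series_incr_1 _) E1). cbv beta in E2.
  assert (0 < Series (fun n => b n - a n)).
  { rewrite Series_incr_1 by exact E.
    rewrite Series_incr_1 by exact E1.
    assert (0 <= Series (fun k => b (S (S k)) - a (S (S k)))).
    { apply Series_ge0. intros n; specialize (H (S (S n))); lra. exact E2. }
    specialize (H 0%nat). lra. }
  lra.
Qed.

Definition lg (n : nat) : R := match n with O => 0 | S m => / INR (S m) end.

Lemma rad1 (a : nat -> R) K x : (forall n, Rabs (a n) <= K) -> Rabs x < 1 -> Rbar_lt (Rabs x) (CV_radius a).
Proof.
  intros Ha Hx. destruct (CV_radius_bounded a) as [Hub _].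
  assert (0 <= Rabs x) by apply Rabs_pos.
  set (y := (Rabs x + 1) / 2).
  assert (Hy : Rbar_le y (CV_radius a)).
  { apply Hub. exists K. intros n. rewrite Rabs_mult.
    assert (Rabs (y ^ n) <= 1).
    { rewrite <- RPow_abs. rewrite Rabs_pos_eq by (unfold y; lra).
      rewrite <- (pow1 n). apply pow_incr. unfold y; lra. }
    assert (0 <= Rabs (a n)) by apply Rabs_pos.
    assert (0 <= Rabs (y ^ n)) by apply Rabs_pos.
    specialize (Ha n). nra. }
  apply Rbar_lt_le_trans with y; auto. simpl. unfold y; lra.
Qed.

Lemma lg_bound n : Rabs (lg n) <= 1.
Proof.
  destruct n as [|m]. simpl. rewrite Rabs_R0; lra. unfold lg.
  rewrite Rabs_pos_eq. rewrite <- Rinv_1. apply Rinv_le_contravar. lra.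
  rewrite S_INR. assert (0 <= INR m) by apply pos_INR. lra.
  left. apply Rinv_0_lt_compat. apply lt_0_INR. lia.
Qed.

Lemma lg_deriv t : 0 <= t < 1 -> is_derive (PSeries lg) t (/ (1 - t)).
Proof.
  intros Ht.
  assert (Hr : Rbar_lt (Rabs t) (CV_radius lg)).
  { apply rad1 with 1. apply lg_bound. rewrite Rabs_pos_eq; lra. }
  assert (H := is_derive_PSeries lg t Hr).
  replace (/ (1 - t)) with (PSeries (PS_derive lg) t). exact H.
  unfold PSeries. rewrite <- Series_geom by (rewrite Rabs_pos_eq; lra).
  apply Series_ext. intros n. unfold PS_derive. change (lg (S n)) with (/ INR (S n)).
  rewrite Rinv_r. ring. apply not_0_INR. lia.
Qed.

Lemma ln_deriv t : t < 1 -> is_derive (fun y => ln (1 - y)) t (- / (1 - t)).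
Proof.
  intros Ht. auto_derive. lra. field. lra.
Qed.

Lemma lnser x : 0 <= x < 1 -> PSeries lg x = - ln (1 - x).
Proof.
  intros Hx. destruct (Req_dec x 0) as [->|Hx0].
  - rewrite PSeries_0. simpl. rewrite Rminus_0_r, ln_1. ring.
  - assert (E : (fun t => PSeries lg t + ln (1 - t)) 0 = (fun t => PSeries lg t + ln (1 - t)) x).
    { apply (eq_is_derive (fun t => PSeries lg t + ln (1 - t)) 0 x); [| lra]. intros t Ht.
      assert (H3 := is_derive_plus _ _ t _ _ (lg_deriv t ltac:(lra)) (ln_deriv t ltac:(lra))).
      replace (@zero R_NormedModule) with (plus (/ (1 - t)) (- / (1 - t))).
      exact H3. unfold plus, zero; simpl. ring. }
    simpl in E. rewrite PSeries_0, Rminus_0_r, ln_1 in E. simpl in E. lra.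
Qed.

Lemma im_le_Cmod (c : C) : Rabs (Im c) <= Cmod c.
Proof.
  assert (H := Cmod2_alt c). assert (H0 := Cmod_ge_0 c).
  assert (E : Rabs (Im c) ^ 2 = Im c ^ 2) by apply pow2_abs.
  assert (0 <= Rabs (Im c)) by apply Rabs_pos.
  assert (Re c ^ 2 >= 0) by nra. nra.
Qed.

Definition csum (u : nat -> C) := ex_series (fun n => Cmod (u n)).

Lemma csum_re u : csum u -> ex_series (fun n => Re (u n)).
Proof. intros H. apply (@ex_series_le R_AbsRing R_CompleteNormedModule _ (fun n => Cmod (u n))); auto. intros n. apply re_le_Cmod. Qed.

Lemma csum_im u : csum u -> ex_series (fun n => Im (u n)).
Proof. intros H. apply (@ex_series_le R_AbsRing R_CompleteNormedModule _ (fun n => Cmod (u n))); auto. intros n. apply im_le_Cmod. Qed.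

Lemma csum_geom (u : nat -> C) K r : 0 <= r < 1 -> (forall n, Cmod (u n) <= K * r ^ n) -> csum u.
Proof.
  intros Hr Hu. apply (ex_geom _ K r Hr). intros n. rewrite Rabs_pos_eq by apply Cmod_ge_0. auto.
Qed.

Lemma csum_scal c u : csum u -> csum (fun n => (c * u n)%C).
Proof.
  intros H. unfold csum. apply (ex_series_ext (fun n => Cmod c * Cmod (u n))).
  intros n; rewrite Cmod_mult; auto.
  apply (ex_series_scal_l (Cmod c) (fun n => Cmod (u n))). exact H.
Qed.

Lemma csum_shift u : csum u -> csum (fun n => u (S n)).
Proof. intros H. unfold csum. apply (proj1 (ex_series_incr_1 (fun n => Cmod (u n)))). exact H. Qed.

Lemma csum_plus u v : csum u -> csum v -> csum (fun n => (u n + v n)%C).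
Proof.
  intros Hu Hv. unfold csum. apply (@ex_series_le R_AbsRing R_CompleteNormedModule _ (fun n => Cmod (u n) + Cmod (v n))).
  intros n. unfold norm; simpl. unfold abs; simpl. rewrite Rabs_pos_eq by apply Cmod_ge_0. apply Cmod_triangle.
  apply (ex_series_plus (fun n => Cmod (u n)) (fun n => Cmod (v n))); auto.
Qed.

Lemma CSeries_ext u v : (forall n, u n = v n) -> CSeries u = CSeries v.
Proof.
  intros H. unfold CSeries. f_equal; apply Series_ext; intros n; rewrite H; auto.
Qed.

Lemma CSeries_plus u v : csum u -> csum v -> CSeries (fun n => (u n + v n)%C) = (CSeries u + CSeries v)%C.
Proof.
  intros Hu Hv. unfold CSeries. apply injective_projections; simpl.
  - rewrite <- Series_plus by (apply csum_re; auto). apply Series_ext; intros; reflexivity.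
  - rewrite <- Series_plus by (apply csum_im; auto). apply Series_ext; intros; reflexivity.
Qed.

Lemma CSeries_scal c u : csum u -> CSeries (fun n => (c * u n)%C) = (c * CSeries u)%C.
Proof.
  intros Hu. assert (Hr := csum_re u Hu). assert (Hi := csum_im u Hu).
  unfold CSeries. apply injective_projections; simpl.
  - rewrite <- !Series_scal_l. rewrite <- Series_minus.
    apply Series_ext; intros; reflexivity.
    apply (ex_series_scal_l (fst c) (fun n => Re (u n))); auto.
    apply (ex_series_scal_l (snd c) (fun n => Im (u n))); auto.
  - rewrite <- !Series_scal_l. rewrite <- Series_plus.
    apply Series_ext; intros; reflexivity.
    apply (ex_series_scal_l (fst c) (fun n => Im (u n))); auto.
    apply (ex_series_scal_l (snd c) (fun n => Re (u n))); auto.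
Qed.

Lemma CSeries_shift u : csum u -> CSeries u = (u 0%nat + CSeries (fun n => u (S n)))%C.
Proof.
  intros Hu. unfold CSeries. apply injective_projections; simpl.
  - apply Series_incr_1. apply csum_re; auto.
  - apply Series_incr_1. apply csum_im; auto.
Qed.

Lemma CSeries_real (v : nat -> R) : CSeries (fun n => RtoC (v n)) = RtoC (Series v).
Proof.
  unfold CSeries. apply injective_projections; simpl. reflexivity.
  apply Series_zero.
Qed.

Lemma Series_le' (a b : nat -> R) : (forall n, a n <= b n) -> ex_series a -> ex_series b -> Series a <= Series b.
Proof.
  intros H Ea Eb.
  assert (0 <= Series (fun n => b n - a n)).
  { apply Series_ge0. intros n; specialize (H n); lra. apply (ex_series_minus b a Eb Ea). }
  rewrite Series_minus in H0 by auto. lra.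
Qed.

Lemma CSeries_norm u : csum u -> Cmod (CSeries u) <= Series (fun n => Cmod (u n)).
Proof.
  intros Hu. set (w := CSeries u). set (S := Series (fun n => Cmod (u n))).
  assert (HS : 0 <= S) by (apply Series_ge0; auto; intros; apply Cmod_ge_0).
  assert (Hw := Cmod_ge_0 w).
  assert (E : Cmod w ^ 2 = Series (fun n => Re w * Re (u n) + Im w * Im (u n))).
  { rewrite Series_plus, !Series_scal_l.
    rewrite Cmod2_alt. unfold w at 2 4. unfold CSeries. simpl. ring.
    apply (ex_series_scal_l (Re w) (fun n => Re (u n))); apply csum_re; auto.
    apply (ex_series_scal_l (Im w) (fun n => Im (u n))); apply csum_im; auto. }
  assert (L : Series (fun n => Re w * Re (u n) + Im w * Im (u n)) <= Series (fun n => Cmod w * Cmod (u n))).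
  { apply Series_le'.
    - intros n. assert (H1 := re_le_Cmod (Cconj w * u n)%C).
      rewrite Cmod_mult, Cmod_conj in H1.
      assert (H2 := Rle_abs (Re (Cconj w * u n)%C)).
      replace (Re w * Re (u n) + Im w * Im (u n)) with (Re (Cconj w * u n)%C).
      lra. clearbody w. destruct w as [w1 w2]. destruct (u n) as [u1 u2]. unfold Cconj, Cmult, Re, Im; simpl. ring.
    - apply (ex_series_plus (fun n => Re w * Re (u n)) (fun n => Im w * Im (u n))).
      apply (ex_series_scal_l (Re w) (fun n => Re (u n))); apply csum_re; auto.
      apply (ex_series_scal_l (Im w) (fun n => Im (u n))); apply csum_im; auto.
    - apply (ex_series_scal_l (Cmod w) (fun n => Cmod (u n))); auto. }
  rewrite Series_scal_l in L. fold S in L. nra.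
Qed.

Definition cq (M b : R) (n : nat) : R :=
  match n with O => 2 * b | S m => M / INR (S (S (S m))) end.
Definition Qs M b r := Series (fun n => cq M b n * r ^ (S n)).
Definition Ps M b r := Series (fun n => INR (S n) * cq M b n * r ^ (S n)).
Definition Gs M b al r := Series (fun n => (INR (S n) + 1 - al) * cq M b n * r ^ (S n)).

Lemma INR_S_pos n : 0 < INR (S n).
Proof. apply lt_0_INR. lia. Qed.

Lemma cq_nonneg M b n : 0 <= b -> 0 < M -> 0 <= cq M b n.
Proof.
  intros Hb HM. destruct n; unfold cq; cbv beta iota. lra.
  unfold Rdiv. apply Rmult_le_pos. lra. left. apply Rinv_0_lt_compat. apply INR_S_pos.
Qed.

Lemma frac_le M x : 0 <= x -> 0 < M -> x * (M / (x + 1)) <= M.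
Proof.
  intros Hx HM. assert (H1 : 0 < x + 1) by lra.
  assert (Hi : / (x + 1) * (x + 1) = 1) by (field; lra).
  assert (0 < / (x + 1)) by (apply Rinv_0_lt_compat; lra).
  unfold Rdiv. nra.
Qed.

Lemma cq_le1 M b n : 0 <= b -> 0 < M -> INR (S n) * cq M b n <= 2 * b + M.
Proof.
  intros Hb HM. destruct n as [|m]; unfold cq; cbv beta iota.
  - simpl INR. lra.
  - replace (INR (S (S (S m)))) with (INR (S (S m)) + 1) by (rewrite (S_INR (S (S m))); ring).
    assert (H := frac_le M (INR (S (S m))) (pos_INR _) HM). lra.
Qed.

Lemma cq_le0 M b n : 0 <= b -> 0 < M -> cq M b n <= 2 * b + M.
Proof.
  intros Hb HM. assert (H := cq_le1 M b n Hb HM). assert (H2 := cq_nonneg M b n Hb HM).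
  assert (1 <= INR (S n)) by (rewrite S_INR; assert (0 <= INR n) by apply pos_INR; lra). nra.
Qed.

Lemma pow_S_le r n : 0 <= r <= 1 -> r ^ (S n) <= r ^ n.
Proof. intros Hr. simpl. assert (0 <= r ^ n) by (apply pow_le; lra). nra. Qed.

Lemma ex_Q M b r : 0 <= b -> 0 < M -> 0 <= r < 1 -> ex_series (fun n => cq M b n * r ^ (S n)).
Proof.
  intros Hb HM Hr. apply (ex_geom _ (2 * b + M) r Hr). intros n.
  assert (H1 := cq_le0 M b n Hb HM). assert (H2 := cq_nonneg M b n Hb HM).
  assert (H3 := pow_S_le r n ltac:(lra)). assert (0 <= r ^ (S n)) by (apply pow_le; lra).
  rewrite Rabs_pos_eq by nra. nra.
Qed.

Lemma ex_P M b r : 0 <= b -> 0 < M -> 0 <= r < 1 -> ex_series (fun n => INR (S n) * cq M b n * r ^ (S n)).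
Proof.
  intros Hb HM Hr. apply (ex_geom _ (2 * b + M) r Hr). intros n.
  assert (H1 := cq_le1 M b n Hb HM). assert (H2 := cq_nonneg M b n Hb HM).
  assert (H3 := pow_S_le r n ltac:(lra)). assert (0 <= r ^ (S n)) by (apply pow_le; lra).
  assert (H4 := INR_S_pos n).
  rewrite Rabs_pos_eq by (apply Rmult_le_pos; [nra| auto]). nra.
Qed.

Lemma G_split M b al r : 0 <= b -> 0 < M -> 0 <= r < 1 ->
  Gs M b al r = Ps M b r + (1 - al) * Qs M b r.
Proof.
  intros Hb HM Hr. unfold Gs, Ps, Qs. rewrite <- Series_scal_l. rewrite <- Series_plus.
  apply Series_ext; intros; ring.
  apply ex_P; auto.
  apply (ex_series_scal_l (1 - al) (fun n => cq M b n * r ^ (S n))). apply ex_Q; auto.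
Qed.

Lemma ex_G M b al r : 0 <= b -> 0 < M -> 0 <= r < 1 ->
  ex_series (fun n => (INR (S n) + 1 - al) * cq M b n * r ^ (S n)).
Proof.
  intros Hb HM Hr.
  apply (ex_series_ext (fun n => INR (S n) * cq M b n * r ^ (S n) + (1 - al) * (cq M b n * r ^ (S n)))).
  intros n; match goal with |- ?x = ?y => change (@eq R x y) end; ring.
  apply (ex_series_plus (fun n => INR (S n) * cq M b n * r ^ (S n)) (fun n => (1 - al) * (cq M b n * r ^ (S n)))).
  apply ex_P; auto.
  apply (ex_series_scal_l (1 - al) (fun n => cq M b n * r ^ (S n))). apply ex_Q; auto.
Qed.

Lemma Q_nonneg M b r : 0 <= b -> 0 < M -> 0 <= r < 1 -> 0 <= Qs M b r.
Proof.
  intros Hb HM Hr. apply Series_ge0. intros n. apply Rmult_le_pos. apply cq_nonneg; auto.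
  apply pow_le; lra. apply ex_Q; auto.
Qed.

Lemma Q_le_P M b r : 0 <= b -> 0 < M -> 0 <= r < 1 -> Qs M b r <= Ps M b r.
Proof.
  intros Hb HM Hr. apply Series_le'. intros n.
  assert (H2 := cq_nonneg M b n Hb HM). assert (0 <= r ^ (S n)) by (apply pow_le; lra).
  assert (1 <= INR (S n)) by (rewrite S_INR; assert (0 <= INR n) by apply pos_INR; lra).
  assert (0 <= cq M b n * r ^ (S n)) by nra. nra.
  apply ex_Q; auto. apply ex_P; auto.
Qed.

Lemma G_lt M b al r s : 0 <= b -> 0 < M -> 0 <= al < 1 -> 0 <= r < s -> s < 1 ->
  Gs M b al r < Gs M b al s.
Proof.
  intros Hb HM Hal Hr Hs. unfold Gs. apply Series_lt1.
  - intros n. assert (H2 := cq_nonneg M b n Hb HM).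
    assert (1 <= INR (S n)) by (rewrite S_INR; assert (0 <= INR n) by apply pos_INR; lra).
    assert (0 <= r ^ (S n)) by (apply pow_le; lra).
    assert (r ^ (S n) <= s ^ (S n)) by (apply pow_incr; lra).
    assert (0 <= (INR (S n) + 1 - al) * cq M b n) by nra. split; nra.
  - unfold cq; cbv beta iota. simpl INR.
    assert (0 < M / (1 + 1 + 1)) by (unfold Rdiv; apply Rmult_lt_0_compat; lra).
    assert (r ^ 2 < s ^ 2) by (simpl; nra). apply Rmult_lt_compat_l; [apply Rmult_lt_0_compat; lra | auto].
  - apply ex_G; auto; lra.
  - apply ex_G; auto; lra.
Qed.

Lemma ex_lg r : 0 <= r < 1 -> ex_series (fun n => lg n * r ^ n).
Proof.
  intros Hr. apply (ex_geom _ 1 r Hr). intros n. rewrite Rabs_mult.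
  assert (H := lg_bound n). rewrite <- RPow_abs. rewrite (Rabs_pos_eq r) by lra.
  assert (0 <= r ^ n) by (apply pow_le; lra). assert (0 <= Rabs (lg n)) by apply Rabs_pos. nra.
Qed.

Lemma S2_closed r : 0 <= r < 1 ->
  Series (fun k => lg (S (S (S k))) * r ^ (S (S (S k)))) = - ln (1 - r) - r - r ^ 2 / 2.
Proof.
  intros Hr. rewrite <- lnser by auto. unfold PSeries.
  assert (E0 := ex_lg r Hr).
  assert (E1 := proj1 (ex_series_incr_1 _) E0). cbv beta in E1.
  assert (E2 := proj1 (ex_series_incr_1 _) E1). cbv beta in E2.
  rewrite (Series_incr_1 _ E0). rewrite (Series_incr_1 _ E1). rewrite (Series_incr_1 _ E2).
  unfold lg. simpl. field.
Qed.

Lemma G_closed M b al r : 0 <= b -> 0 < M -> 0 < r < 1 ->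
  Gs M b al r = (2 - al) * (2 * b) * r + M * (r ^ 2 / (1 - r))
     - al * (M / r) * (- ln (1 - r) - r - r ^ 2 / 2).
Proof.
  intros Hb HM Hr. unfold Gs.
  assert (E0 := ex_G M b al r Hb HM ltac:(lra)).
  rewrite (Series_incr_1 _ E0).
  rewrite (Series_ext _ (fun k => M * r ^ 2 * r ^ k - al * (M / r) * (lg (S (S (S k))) * r ^ (S (S (S k)))))).
  2:{ intros k. unfold cq, lg. cbv beta iota.
      rewrite !S_INR. simpl pow. assert (0 <= INR k) by apply pos_INR. field; repeat split; lra.
      }
  rewrite Series_minus. rewrite !Series_scal_l. rewrite Series_geom by (rewrite Rabs_pos_eq; lra).
  rewrite S2_closed by lra. unfold cq. simpl INR. simpl pow. field. lra.
  apply (ex_series_scal_l (M * r ^ 2) (fun k => r ^ k)). exists (/ (1 - r)). apply is_series_geom. rewrite Rabs_pos_eq; lra.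
  apply (ex_series_scal_l (al * (M / r)) (fun k => lg (S (S (S k))) * r ^ (S (S (S k))))).
  assert (E1 := proj1 (ex_series_incr_1 _) (ex_lg r ltac:(lra))). cbv beta in E1.
  assert (E2 := proj1 (ex_series_incr_1 _) E1). cbv beta in E2.
  assert (E3 := proj1 (ex_series_incr_1 _) E2). cbv beta in E3. exact E3.
Qed.

Lemma G_eq M b al r : 0 <= b -> 0 < M -> 0 < r < 1 -> r0_eq M b al r -> Gs M b al r = 1 - al.
Proof.
  intros Hb HM Hr Heq. rewrite G_closed by auto. unfold r0_eq in Heq.
  set (L := ln (1 - r)) in *.
  assert (K : ((2 - al) * (2 * b) * r + M * (r ^ 2 / (1 - r)) - al * (M / r) * (- L - r - r ^ 2 / 2) - (1 - al)) * (2 * (1 - r))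
     = 2 * M * (1 + al * (1 - r) * L / r) - (2 * (1 + M) * (1 - al) + (2 - al) * (M - 4 * b) * r) * (1 - r)).
  { field. lra. }
  rewrite Heq in K. assert (2 * (1 - r) <> 0) by lra.
  assert (Z : (2 - al) * (2 * b) * r + M * (r ^ 2 / (1 - r)) - al * (M / r) * (- L - r - r ^ 2 / 2) - (1 - al) = 0).
  { apply (Rmult_eq_reg_r (2 * (1 - r))); auto. rewrite K. ring. }
  lra.
Qed.

Lemma cq_le2 M b m : 0 <= b -> 0 < M -> INR (S (S m)) * cq M b m <= 4 * b + M.
Proof.
  intros Hb HM. destruct m as [|k]; unfold cq; cbv beta iota.
  - simpl INR. lra.
  - rewrite Rmult_comm. unfold Rdiv. rewrite Rmult_assoc. rewrite Rinv_l. lra.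
    apply not_0_INR. lia.
Qed.

Section ClassF.
Variables (M b : R) (a : nat -> C).
Hypothesis Hb : 0 <= b.
Hypothesis HM : 0 < M.
Hypothesis Ha : classF M b a.

Lemma a_cq n : Cmod (a (S (S n))) <= cq M b n.
Proof.
  destruct Ha as (H0 & H1 & H2 & H3). destruct n as [|m].
  - unfold cq. rewrite H2. lra.
  - unfold cq; cbv beta iota. apply H3. lia.
Qed.

Lemma a_bound n : Cmod (a n) <= 1 + 2 * b + M.
Proof.
  destruct Ha as (H0 & H1 & H2 & H3). destruct n as [|[|m]].
  - rewrite H0, Cmod_0. lra.
  - rewrite H1, Cmod_1. lra.
  - assert (H := a_cq m). assert (H' := cq_le0 M b m Hb HM). lra.
Qed.

Lemma a_dbound n : INR (S n) * Cmod (a (S n)) <= 1 + 4 * b + M.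
Proof.
  destruct Ha as (H0 & H1 & H2 & H3). destruct n as [|m].
  - rewrite H1, Cmod_1. simpl. lra.
  - assert (H := a_cq m). assert (H' := cq_le2 M b m Hb HM).
    assert (0 < INR (S (S m))) by apply INR_S_pos.
    assert (INR (S (S m)) * Cmod (a (S (S m))) <= INR (S (S m)) * cq M b m).
    { apply Rmult_le_compat_l; lra. }
    lra.
Qed.

Variable z : C.
Hypothesis Hz : Cmod z < 1.

Let rho := Cmod z.
Lemma rho_ok : 0 <= rho < 1.
Proof. split. apply Cmod_ge_0. exact Hz. Qed.

Definition tT n := (a (S (S n)) * z ^ (S n))%C.
Definition tU n := (RtoC (INR (S n)) * a (S (S n)) * z ^ (S n))%C.
Definition Tz := CSeries tT.
Definition Uz := CSeries tU.

Lemma Cmod_tT n : Cmod (tT n) <= cq M b n * rho ^ (S n).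
Proof.
  unfold tT. rewrite Cmod_mult, Cmod_pow. apply Rmult_le_compat_r.
  apply pow_le; apply Cmod_ge_0. apply a_cq.
Qed.

Lemma Cmod_tU n : Cmod (tU n) <= INR (S n) * cq M b n * rho ^ (S n).
Proof.
  unfold tU. rewrite !Cmod_mult, Cmod_pow, Cmod_R, Rabs_pos_eq by apply pos_INR.
  apply Rmult_le_compat_r. apply pow_le; apply Cmod_ge_0.
  apply Rmult_le_compat_l. apply pos_INR. apply a_cq.
Qed.

Lemma csum_T : csum tT.
Proof.
  apply (csum_geom _ (2 * b + M) rho rho_ok). intros n.
  assert (H := Cmod_tT n). assert (H1 := cq_le0 M b n Hb HM). assert (H2 := cq_nonneg M b n Hb HM).
  assert (H3 := pow_S_le rho n ltac:(pose proof rho_ok; lra)).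
  assert (0 <= rho ^ (S n)) by (apply pow_le; apply Cmod_ge_0). nra.
Qed.

Lemma csum_U : csum tU.
Proof.
  apply (csum_geom _ (2 * b + M) rho rho_ok). intros n.
  assert (H := Cmod_tU n). assert (H1 := cq_le1 M b n Hb HM). assert (H2 := cq_nonneg M b n Hb HM).
  assert (H3 := pow_S_le rho n ltac:(pose proof rho_ok; lra)).
  assert (0 <= rho ^ (S n)) by (apply pow_le; apply Cmod_ge_0).
  assert (0 <= INR (S n) * cq M b n) by (apply Rmult_le_pos; [apply pos_INR | auto]). nra.
Qed.

Lemma csum_f : csum (fun n => (a n * z ^ n)%C).
Proof.
  apply (csum_geom _ (1 + 2 * b + M) rho rho_ok). intros n.
  rewrite Cmod_mult, Cmod_pow. apply Rmult_le_compat_r. apply pow_le; apply Cmod_ge_0. apply a_bound.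
Qed.

Lemma csum_d : csum (fun n => (RtoC (INR (S n)) * a (S n) * z ^ n)%C).
Proof.
  apply (csum_geom _ (1 + 4 * b + M) rho rho_ok). intros n.
  rewrite !Cmod_mult, Cmod_pow, Cmod_R, Rabs_pos_eq by apply pos_INR.
  apply Rmult_le_compat_r. apply pow_le; apply Cmod_ge_0. apply a_dbound.
Qed.

Lemma fval_eq : fval a z = (z * (1 + Tz))%C.
Proof.
  destruct Ha as (H0 & H1 & H2 & H3).
  unfold fval. rewrite (CSeries_shift _ csum_f). rewrite (CSeries_shift _ (csum_shift _ csum_f)).
  rewrite (CSeries_ext _ (fun n => (z * tT n)%C)).
  2:{ intros n. unfold tT. simpl. ring. }
  rewrite (CSeries_scal _ _ csum_T). rewrite H0, H1. unfold Tz. simpl. ring.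
Qed.

Lemma dval_eq : (z * dval a z)%C = (z * (1 + Tz + Uz))%C.
Proof.
  destruct Ha as (H0 & H1 & H2 & H3).
  unfold dval. rewrite <- (CSeries_scal _ _ csum_d).
  rewrite (CSeries_shift _ (csum_scal z _ csum_d)).
  rewrite (CSeries_ext _ (fun n => (z * (tU n + tT n))%C)).
  2:{ intros n. unfold tT, tU. rewrite (S_INR (S n)). rewrite RtoC_plus. simpl. ring. }
  rewrite (CSeries_scal _ _ (csum_plus _ _ csum_U csum_T)).
  rewrite (CSeries_plus _ _ csum_U csum_T). rewrite H1. unfold Tz, Uz. simpl. ring.
Qed.

Lemma quot_eq : z <> 0%C -> (1 + Tz)%C <> 0%C -> quot a z = (1 + Uz / (1 + Tz))%C.
Proof.
  intros Hz0 HT. unfold quot. destruct (Ceq_dec z 0) as [E|_]. contradiction.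
  rewrite dval_eq, fval_eq. field. split; auto.
Qed.

Lemma T_bound : Cmod Tz <= Qs M b rho.
Proof.
  unfold Tz, Qs. eapply Rle_trans. apply (CSeries_norm _ csum_T).
  apply Series_le. intros n; split. apply Cmod_ge_0. apply Cmod_tT.
  apply ex_Q; auto. apply rho_ok.
Qed.

Lemma U_bound : Cmod Uz <= Ps M b rho.
Proof.
  unfold Uz, Ps. eapply Rle_trans. apply (CSeries_norm _ csum_U).
  apply Series_le. intros n; split. apply Cmod_ge_0. apply Cmod_tU.
  apply ex_P; auto. apply rho_ok.
Qed.

End ClassF.

Lemma PQ_bound M b al r : 0 <= b -> 0 < M -> 0 <= al < 1 -> 0 <= r < 1 ->
  Gs M b al r <= 1 - al -> Qs M b r < 1 /\ Ps M b r <= (1 - al) * (1 - Qs M b r).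
Proof.
  intros Hb HM Hal Hr HG. rewrite G_split in HG by auto.
  assert (H1 := Q_le_P M b r Hb HM Hr). assert (H2 := Q_nonneg M b r Hb HM Hr).
  split; nra.
Qed.

Lemma PQ_bound_strict M b al r : 0 <= b -> 0 < M -> 0 <= al < 1 -> 0 <= r < 1 ->
  Gs M b al r < 1 - al -> Ps M b r < (1 - al) * (1 - Qs M b r).
Proof.
  intros Hb HM Hal Hr HG. rewrite G_split in HG by auto. nra.
Qed.

Lemma C_neq0 (w : C) : 0 < Cmod w -> w <> 0%C.
Proof. intros H E. rewrite E, Cmod_0 in H. lra. Qed.

Lemma est_quot M b a z : 0 <= b -> 0 < M -> classF M b a -> 0 < Cmod z < 1 -> Qs M b (Cmod z) < 1 ->
  fval a z <> 0%C /\ Cmod (quot a z - 1)%C * (1 - Qs M b (Cmod z)) <= Ps M b (Cmod z).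
Proof.
  intros Hb HM Ha Hz HQ.
  assert (HT := T_bound M b a Hb HM Ha z (proj2 Hz)).
  assert (HU := U_bound M b a Hb HM Ha z (proj2 Hz)).
  set (T := Tz a z) in *. set (U := Uz a z) in *.
  assert (Hc : 1 - Qs M b (Cmod z) <= Cmod (1 + T)%C).
  { assert (H := Cmod_triangle (1 + T)%C (- T)%C).
    replace (1 + T + - T)%C with (RtoC 1) in H by ring. rewrite Cmod_1, Cmod_opp in H. lra. }
  assert (HT0 : (1 + T)%C <> 0%C) by (apply C_neq0; lra).
  assert (Hz0 : z <> 0%C) by (apply C_neq0; lra).
  split.
  - rewrite (fval_eq M b a Hb HM Ha z (proj2 Hz)). apply Cmult_neq_0; auto.
  - rewrite (quot_eq M b a Hb HM Ha z (proj2 Hz)) by auto. fold T U.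
    replace (1 + U / (1 + T) - 1)%C with (U / (1 + T))%C by ring.
    rewrite Cmod_div by auto.
    assert (0 < Cmod (1 + T)%C) by lra.
    assert (0 <= Cmod U) by apply Cmod_ge_0.
    assert (0 <= Cmod U / Cmod (1 + T)%C) by (unfold Rdiv; apply Rmult_le_pos; [lra | left; apply Rinv_0_lt_compat; lra]).
    assert (E : Cmod U / Cmod (1 + T)%C * Cmod (1 + T)%C = Cmod U) by (field; lra).
    nra.
Qed.

Definition a0 (M b : R) (n : nat) : C :=
  match n with O => 0%C | S O => 1%C | S (S m) => RtoC (- cq M b m) end.

Lemma a0_classF M b : 0 <= b -> 0 < M -> classF M b (a0 M b).
Proof.
  intros Hb HM. split; [reflexivity | split; [reflexivity | split]].
  - simpl. rewrite Cmod_R, Rabs_Ropp, Rabs_pos_eq; lra.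
  - intros n Hn. destruct n as [|[|[|m]]]; try lia.
    unfold a0, cq. rewrite Cmod_R, Rabs_Ropp, Rabs_pos_eq. lra.
    unfold Rdiv. apply Rmult_le_pos. lra. left. apply Rinv_0_lt_compat. apply INR_S_pos.
Qed.

Lemma RtoC_pow x n : (RtoC x ^ n)%C = RtoC (x ^ n).
Proof.
  induction n; simpl. reflexivity. rewrite IHn. rewrite RtoC_mult. reflexivity.
Qed.

Lemma Series_opp (u : nat -> R) : Series (fun n => - u n) = - Series u.
Proof.
  rewrite (Series_ext _ (fun n => -1 * u n)) by (intros; ring). rewrite Series_scal_l. ring.
Qed.

Lemma T_a0 M b r : Tz (a0 M b) (RtoC r) = RtoC (- Qs M b r).
Proof.
  unfold Tz, tT, Qs. rewrite (CSeries_ext _ (fun n => RtoC (- (cq M b n * r ^ (S n))))).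
  rewrite CSeries_real. rewrite Series_opp. reflexivity.
  intros n. unfold a0. rewrite RtoC_pow. rewrite <- RtoC_mult. f_equal. ring.
Qed.

Lemma U_a0 M b r : Uz (a0 M b) (RtoC r) = RtoC (- Ps M b r).
Proof.
  unfold Uz, tU, Ps. rewrite (CSeries_ext _ (fun n => RtoC (- (INR (S n) * cq M b n * r ^ (S n))))).
  rewrite CSeries_real. rewrite Series_opp. reflexivity.
  intros n. unfold a0. rewrite RtoC_pow. rewrite <- !RtoC_mult. f_equal. ring.
Qed.

Lemma sharp M b al r : 0 <= b -> 0 < M -> 0 <= al < 1 -> 0 < r < 1 ->
  Qs M b r < 1 -> 1 - al < Gs M b al r ->
  exists q, quot (a0 M b) (RtoC r) = RtoC q /\ q < al.
Proof.
  intros Hb HM Hal Hr HQ HG.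
  assert (Ha := a0_classF M b Hb HM).
  assert (Hz : Cmod (RtoC r) < 1) by (rewrite Cmod_R, Rabs_pos_eq; lra).
  assert (Hz0 : RtoC r <> 0%C) by (apply C_neq0; rewrite Cmod_R, Rabs_pos_eq; lra).
  assert (HT : (1 + Tz (a0 M b) (RtoC r))%C <> 0%C).
  { rewrite T_a0. apply C_neq0. rewrite <- RtoC_plus, Cmod_R, Rabs_pos_eq; lra. }
  rewrite (quot_eq M b (a0 M b) Hb HM Ha (RtoC r) Hz Hz0 HT).
  rewrite T_a0, U_a0.
  exists (1 - Ps M b r / (1 - Qs M b r)). split.
  - rewrite <- RtoC_plus. set (P := Ps M b r) in *. set (Q := Qs M b r) in *.
    assert (1 - Q <> 0) by lra.
    unfold Cdiv. rewrite <- (RtoC_inv (1 + - Q)) by lra. rewrite <- RtoC_mult, <- RtoC_plus. f_equal. field. lra.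
  - rewrite G_split in HG by (auto; lra).
    assert (0 < 1 - Qs M b r) by lra.
    assert (E : Ps M b r / (1 - Qs M b r) * (1 - Qs M b r) = Ps M b r) by (field; lra).
    nra.
Qed.

Lemma Q_cont M b r0 : 0 <= b -> 0 < M -> 0 <= r0 < 1 ->
  forall eps, 0 < eps -> exists del, 0 < del /\ forall y, Rabs (y - r0) < del -> Rabs (Qs M b y - Qs M b r0) < eps.
Proof.
  intros Hb HM Hr eps Heps.
  assert (EQ : forall y, Qs M b y = y * PSeries (cq M b) y).
  { intros y. unfold Qs, PSeries. rewrite <- Series_scal_l. apply Series_ext. intros n. simpl. ring. }
  assert (Hc : continuity_pt (fun y => y * PSeries (cq M b) y) r0).
  { apply (continuity_pt_mult (fun y => y) (PSeries (cq M b))). apply continuity_pt_id.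
    apply PSeries_continuity. apply rad1 with (2 * b + M).
    intros n. rewrite Rabs_pos_eq by (apply cq_nonneg; auto). apply cq_le0; auto.
    rewrite Rabs_pos_eq; lra. }
  unfold continuity_pt, continue_in, limit1_in, limit_in in Hc.
  destruct (Hc eps Heps) as [del [Hdel H]]. exists del. split; auto.
  intros y Hy. rewrite !EQ. destruct (Req_dec y r0) as [->|Hne].
  - rewrite Rminus_eq_0, Rabs_R0. lra.
  - apply (H y). split. split. exact I. auto. exact Hy.
Qed.

Lemma quot_0 a : quot a 0%C = RtoC 1.
Proof. unfold quot. destruct (Ceq_dec 0 0) as [_|n]. reflexivity. contradiction. Qed.

Lemma Cmod_1m1 : Cmod (RtoC 1 - RtoC 1)%C = 0.
Proof. replace (RtoC 1 - RtoC 1)%C with (RtoC 0) by (apply injective_projections; simpl; ring). rewrite Cmod_R. apply Rabs_R0. Qed.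

Lemma Re_ge (w : C) : 1 - Cmod (w - RtoC 1)%C <= Re w.
Proof.
  assert (H := re_le_Cmod (w - RtoC 1)%C).
  assert (H2 := Rle_abs (- Re (w - RtoC 1)%C)). rewrite Rabs_Ropp in H2.
  replace (Re (w - RtoC 1)%C) with (Re w - 1) in * by (destruct w; unfold Cminus, Cplus, Copp, Re, RtoC; simpl; ring). lra.
Qed.

Lemma part_i M b al r0 a z : 0 <= b -> 0 < M -> 0 <= al < 1 -> 0 < r0 < 1 ->
  Gs M b al r0 = 1 - al -> classF M b a -> Cmod z <= r0 ->
  (0 < Cmod z -> fval a z <> 0%C) /\ Cmod (quot a z - 1)%C <= 1 - al /\
  (Cmod z < r0 -> Cmod (quot a z - 1)%C < 1 - al).
Proof.
  intros Hb HM Hal Hr0 HG Ha Hz.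
  destruct (Req_dec (Cmod z) 0) as [E|Ne].
  - apply Cmod_eq_0 in E. subst z. rewrite quot_0, Cmod_1m1. rewrite Cmod_0. split; [lra | split; lra].
  - assert (Hpos : 0 < Cmod z) by (assert (H := Cmod_ge_0 z); lra).
    assert (HGz : Gs M b al (Cmod z) <= 1 - al).
    { destruct (Req_dec (Cmod z) r0) as [->|Hn]. lra.
      left. rewrite <- HG. apply G_lt; auto; lra. }
    destruct (PQ_bound M b al (Cmod z) Hb HM Hal ltac:(lra) HGz) as [HQ HP].
    destruct (est_quot M b a z Hb HM Ha ltac:(lra) HQ) as [Hf HX].
    assert (0 <= Cmod (quot a z - 1)%C) by apply Cmod_ge_0.
    split; [auto | split].
    + nra.
    + intros Hlt. assert (HGs : Gs M b al (Cmod z) < 1 - al) by (rewrite <- HG; apply G_lt; auto; lra).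
      assert (HP' := PQ_bound_strict M b al (Cmod z) Hb HM Hal ltac:(lra) HGs). nra.
Qed.

Lemma find_rho M b al r0 r : 0 <= b -> 0 < M -> 0 <= al < 1 -> 0 < r0 < 1 ->
  Gs M b al r0 = 1 - al -> r0 < r -> r <= 1 ->
  exists rho, 0 < rho < r /\ rho < 1 /\ exists q, quot (a0 M b) (RtoC rho) = RtoC q /\ q < al.
Proof.
  intros Hb HM Hal Hr0 HG Hr Hr1.
  destruct (PQ_bound M b al r0 Hb HM Hal ltac:(lra) ltac:(lra)) as [HQ _].
  destruct (Q_cont M b r0 Hb HM ltac:(lra) (1 - Qs M b r0) ltac:(lra)) as [del [Hdel Hd]].
  set (rho := Rmin (r0 + del / 2) ((r0 + r) / 2)).
  assert (H1 : r0 < rho).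
  { unfold rho, Rmin. destruct (Rle_dec _ _); lra. }
  assert (H2 : rho <= (r0 + r) / 2) by apply Rmin_r.
  assert (H3 : rho <= r0 + del / 2) by apply Rmin_l.
  exists rho. split; [lra | split; [lra |]].
  apply sharp; auto. lra.
  - assert (H := Hd rho ltac:(rewrite Rabs_pos_eq; lra)).
    assert (H' := Rle_abs (Qs M b rho - Qs M b r0)). lra.
  - rewrite <- HG. apply G_lt; auto; lra.
Qed.

Lemma Cmod_rho rho : 0 < rho -> Cmod (RtoC rho) = rho.
Proof. intros H. rewrite Cmod_R, Rabs_pos_eq; lra. Qed.

Theorem theorem2p8 (M b alpha r0 rp : R) :
  0 <= b <= 1 -> 0 < M -> 0 <= alpha < 1 ->
  is_r0 M b alpha r0 -> is_r0 M b (1 / 2) rp ->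
  (* (i) *)
  (forall a, classF M b a -> forall z : C, Cmod z <= r0 ->
     (0 < Cmod z -> fval a z <> 0%C) /\
     Cmod (quot a z - 1)%C <= 1 - alpha) /\
  (* (ii) *)
  is_lub (starlike_radii M b alpha) r0 /\
  (* (iii) *)
  is_lub (parabolic_radii M b) rp.
Proof.
  intros [Hb _] HM Hal [Hr0 [Heq0 _]] [Hrp [Heqp _]].
  assert (HG0 := G_eq M b alpha r0 Hb HM Hr0 Heq0).
  assert (HGp := G_eq M b (1/2) rp Hb HM Hrp Heqp).
  assert (Hhalf : 0 <= 1/2 < 1) by lra.
  split; [| split].
  - intros a Ha z Hz. destruct (part_i M b alpha r0 a z Hb HM Hal Hr0 HG0 Ha Hz) as [A [B _]]. auto.
  - split.
    + intros r [Hr Hall]. destruct (Rle_lt_dec r r0) as [|Hlt]; auto. exfalso.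
      destruct (find_rho M b alpha r0 r Hb HM Hal Hr0 HG0 Hlt ltac:(lra)) as [rho [Hrho [Hrho1 [q [Hq Hqa]]]]].
      destruct (Hall (a0 M b) (a0_classF M b Hb HM)) as [_ H].
      specialize (H (RtoC rho) ltac:(rewrite Cmod_rho; lra)). rewrite Hq in H. simpl in H. lra.
    + intros ub Hub. apply Hub. split. lra. intros a Ha. split.
      * intros z Hz. destruct (part_i M b alpha r0 a z Hb HM Hal Hr0 HG0 Ha ltac:(lra)) as [A _]. apply A; lra.
      * intros z Hz. destruct (part_i M b alpha r0 a z Hb HM Hal Hr0 HG0 Ha ltac:(lra)) as [_ [_ C]].
        specialize (C Hz). assert (H := Re_ge (quot a z)). lra.
  - split.
    + intros r [Hr Hall]. destruct (Rle_lt_dec r rp) as [|Hlt]; auto. exfalso.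
      destruct (find_rho M b (1/2) rp r Hb HM Hhalf Hrp HGp Hlt ltac:(lra)) as [rho [Hrho [Hrho1 [q [Hq Hqa]]]]].
      specialize (Hall (a0 M b) (a0_classF M b Hb HM) (RtoC rho) ltac:(rewrite Cmod_rho; lra)).
      rewrite Hq in Hall. simpl Re in Hall.
      replace (RtoC q - 1)%C with (RtoC (q - 1)) in Hall by (apply injective_projections; simpl; ring).
      rewrite Cmod_R in Hall. rewrite Rabs_left1 in Hall by lra. lra.
    + intros ub Hub. apply Hub. split. lra. intros a Ha z Hz.
      destruct (part_i M b (1/2) rp a z Hb HM Hhalf Hrp HGp Ha ltac:(lra)) as [_ [_ C]].
      specialize (C Hz). assert (H := Re_ge (quot a z)). lra.
Qed.
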